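(* For all finite multisets $\Gamma,\Delta$ of $\mathcal{L}_{A_m}^{\Box}$-formulas: the sequent $\Gamma\Rightarrow\Delta$ is derivable in $\mathsf{GK(A_m)}$ if and only if $\mathcal{I}(\Gamma\Rightarrow\Delta)$ is derivable in $\mathsf{K(A_m)}$.
   Context: $\mathcal{L}_{A_m}^{\Box}$-formulas are built from a countably infinite set $\mathrm{Var}$ of variables using binary $\to$ and unary $\Box$. Fix $p_0\in\mathrm{Var}$; $\overline{0}:=p_0\to p_0$, $\neg\varphi:=\varphi\to\overline{0}$, $\varphi\&\psi:=\neg\varphi\to\psi$, $0\varphi:=\overline{0}$, $(n+1)\varphi:=\varphi\&(n\varphi)$. The axiom system $\mathsf{K(A_m)}$ has axiom schemas (B) $(\varphi\to\psi)\to((\psi\to\chi)\to(\varphi\to\chi))$; (C) $(\varphi\to(\psi\to\chi))\to(\psi\to(\varphi\to\chi))$; (I) $\varphi\to\varphi$; (A) $((\varphi\to\psi)\to\psi)\to\varphi$; (K) $\Box(\varphi\to\psi)\to(\Box\varphi\to\Box\psi)$; (D$_n$) $\Box(n\varphi)\to n\Box\varphi$ ($n\ge2$); rules (mp) $\varphi,\varphi\to\psi/\psi$; (nec) $\varphi/\Box\varphi$; (con$_n$) $n\varphi/\varphi$ ($n\ge2$). A sequent $\Gamma\Rightarrow\Delta$ is an ordered pair of finite multisets of formulas; $\Gamma,\Delta$ denotes multiset union, $n\Gamma$ is $\Gamma$ repeated $n$ times, $n[\varphi]$ the multiset with $n$ copies of $\varphi$, $\Box\Gamma=[\Box\varphi:\varphi\in\Gamma]$.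 $\mathcal{I}(\varphi_1,\dots,\varphi_n\Rightarrow\psi_1,\dots,\psi_m):=(\varphi_1\&\dots\&\varphi_n)\to(\psi_1\&\dots\&\psi_m)$, an empty $\&$-combination being $\overline{0}$. The sequent calculus $\mathsf{GK(A_m)}$ has rules: (id) $\Delta\Rightarrow\Delta$ (no premises); (cut) from $\Gamma,\varphi\Rightarrow\Delta$ and $\Pi\Rightarrow\varphi,\Sigma$ infer $\Gamma,\Pi\Rightarrow\Sigma,\Delta$; (mix) from $\Gamma\Rightarrow\Delta$ and $\Pi\Rightarrow\Sigma$ infer $\Gamma,\Pi\Rightarrow\Sigma,\Delta$; (sc$_n$) from $n\Gamma\Rightarrow n\Delta$ infer $\Gamma\Rightarrow\Delta$ ($n\ge2$); ($\to\Rightarrow$) from $\Gamma,\psi\Rightarrow\varphi,\Delta$ infer $\Gamma,\varphi\to\psi\Rightarrow\Delta$; ($\Rightarrow\to$) from $\Gamma,\varphi\Rightarrow\psi,\Delta$ infer $\Gamma\Rightarrow\varphi\to\psi,\Delta$; ($\Box_n$) from $\Gamma\Rightarrow n[\varphi]$ infer $\Box\Gamma\Rightarrow n[\Box\varphi]$ ($n\ge0$). A derivation is a finite tree of sequents in which each node together with its parents is an instance of a rule. *)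

(* Defs.v *)
From Stdlib Require Import List Permutation.
Import ListNotations.

Inductive form : Type :=
| Var : nat -> form
| Imp : form -> form -> form
| Box : form -> form.

Definition p0 : form := Var 0.
Definition zero : form := Imp p0 p0.
Definition neg (a : form) : form := Imp a zero.
Definition amp (a b : form) : form := Imp (neg a) b.

Fixpoint nmul (n : nat) (a : form) : form :=
  match n with
  | O => zero
  | S k => amp a (nmul k a)
  end.

Inductive Kd : form -> Prop :=
| K_B : forall a b c, Kd (Imp (Imp a b) (Imp (Imp b c) (Imp a c)))
| K_C : forall a b c, Kd (Imp (Imp a (Imp b c)) (Imp b (Imp a c)))
| K_I : forall a, Kd (Imp a a)
| K_A : forall a b, Kd (Imp (Imp (Imp a b) b) a)
| K_K : forall a b, Kd (Imp (Box (Imp a b)) (Imp (Box a) (Box b)))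
| K_D : forall n a, 2 <= n -> Kd (Imp (Box (nmul n a)) (nmul n (Box a)))
| K_mp : forall a b, Kd a -> Kd (Imp a b) -> Kd b
| K_nec : forall a, Kd a -> Kd (Box a)
| K_con : forall n a, 2 <= n -> Kd (nmul n a) -> Kd a.

(* Sequents: pairs of finite multisets, represented by lists taken up to
   permutation (rule GK_perm below makes derivability a property of
   the underlying multisets). *)

Fixpoint ntimes (n : nat) (l : list form) : list form :=
  match n with
  | O => []
  | S k => l ++ ntimes k l
  end.

Inductive GKd : list form -> list form -> Prop :=
| GK_perm : forall G D G' D', GKd G D -> Permutation G G' -> Permutation D D' ->
    GKd G' D'
| GK_id : forall D, GKd D D
| GK_cut : forall G D P S a, GKd (G ++ [a]) D -> GKd P (a :: S) ->
    GKd (G ++ P) (S ++ D)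
| GK_mix : forall G D P S, GKd G D -> GKd P S -> GKd (G ++ P) (S ++ D)
| GK_sc : forall n G D, 2 <= n -> GKd (ntimes n G) (ntimes n D) -> GKd G D
| GK_impL : forall G D a b, GKd (G ++ [b]) (a :: D) -> GKd (G ++ [Imp a b]) D
| GK_impR : forall G D a b, GKd (G ++ [a]) (b :: D) -> GKd G (Imp a b :: D)
| GK_box : forall n G a, GKd G (repeat a n) ->
    GKd (map Box G) (repeat (Box a) n).

Fixpoint bigamp (l : list form) : form :=
  match l with
  | [] => zero
  | [a] => a
  | a :: l' => amp a (bigamp l')
  end.

Definition Iseq (G D : list form) : form := Imp (bigamp G) (bigamp D).

(* Main.v *)
Require Import Defs.
From Stdlib Require Import List Permutation.
From Stdlib Require Import Setoid Morphisms RelationClasses Lia.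
Import ListNotations.

Definition le a b := Kd (Imp a b).
Definition eqv a b := le a b /\ le b a.

Lemma le_refl a : le a a. Proof. apply K_I. Qed.
Lemma le_trans a b c : le a b -> le b c -> le a c.
Proof. unfold le; intros H1 H2. exact (K_mp _ _ H2 (K_mp _ _ H1 (K_B a b c))). Qed.

#[global] Instance le_pre : PreOrder le.
Proof. split. intro; apply le_refl. intros x y z; apply le_trans. Qed.

#[global] Instance eqv_equiv : Equivalence eqv.
Proof.
  split.
  - intro; split; apply le_refl.
  - intros x y [? ?]; split; auto.
  - intros x y z [? ?] [? ?]; split; eapply le_trans; eauto.
Qed.

Lemma Crule a b c : Kd (Imp a (Imp b c)) -> Kd (Imp b (Imp a c)).
Proof. intro H; exact (K_mp _ _ H (K_C a b c)). Qed.
Lemma suffix a b c : le a b -> le (Imp b c) (Imp a c).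
Proof. intro H; exact (K_mp _ _ H (K_B a b c)). Qed.
Lemma prefix a b c : le b c -> le (Imp a b) (Imp a c).
Proof. intro H; exact (K_mp _ _ H (Crule _ _ _ (K_B a b c))). Qed.
Lemma assertion a b : le a (Imp (Imp a b) b).
Proof. exact (Crule _ _ _ (K_I (Imp a b))). Qed.
Lemma dneg' a : eqv (neg (neg a)) a.
Proof. split. exact (K_A a zero). exact (assertion a zero). Qed.
Lemma C_eqv a b c : eqv (Imp a (Imp b c)) (Imp b (Imp a c)).
Proof. split; apply K_C. Qed.

Lemma Z_le a q : le a (Imp (Imp q q) a).
Proof.
  transitivity (Imp (Imp a q) q). apply assertion.
  transitivity (Imp (Imp a q) (Imp (Imp q q) q)). apply prefix, assertion.
  transitivity (Imp (Imp q q) (Imp (Imp a q) q)). apply K_C.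
  apply prefix, K_A.
Qed.
Lemma thm_le t a : Kd t -> le (Imp t a) a.
Proof. intro H; exact (K_mp _ _ H (assertion t a)). Qed.
Lemma Z1 a : eqv (Imp zero a) a.
Proof. split. apply thm_le, K_I. apply Z_le. Qed.
Lemma thm_zero a : Kd a <-> le zero a.
Proof. split; intro H. exact (K_mp _ _ H (Z_le a p0)). exact (K_mp _ _ (K_I p0) H). Qed.
Lemma imp_self u : eqv (Imp u u) zero.
Proof. split. exact (Crule _ _ _ (Z_le p0 u)). apply (proj1 (thm_zero _)), K_I. Qed.

#[global] Instance le_proper : Proper (eqv ==> eqv ==> iff) le.
Proof.
  intros a a' [H1 H2] b b' [H3 H4]; split; intro H.
  - eapply le_trans; [exact H2|]; eapply le_trans; eauto.
  - eapply le_trans; [exact H1|]; eapply le_trans; eauto.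
Qed.
#[global] Instance Kd_proper : Proper (eqv ==> iff) Kd.
Proof. intros a b [H1 H2]; split; intro H; eapply K_mp; eauto. Qed.
#[global] Instance Imp_proper : Proper (eqv ==> eqv ==> eqv) Imp.
Proof.
  intros a a' [H1 H2] b b' [H3 H4]; split; eapply le_trans.
  apply suffix; exact H2. apply prefix; exact H3.
  apply suffix; exact H1. apply prefix; exact H4.
Qed.
Lemma box_mono a b : le a b -> le (Box a) (Box b).
Proof. intro H; exact (K_mp _ _ (K_nec _ H) (K_K a b)). Qed.
#[global] Instance Box_proper : Proper (eqv ==> eqv) Box.
Proof. intros a b [H1 H2]; split; apply box_mono; auto. Qed.
#[global] Instance neg_proper : Proper (eqv ==> eqv) neg.
Proof. intros a b H; unfold neg; rewrite H; reflexivity. Qed.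
#[global] Instance amp_proper : Proper (eqv ==> eqv ==> eqv) amp.
Proof. intros a b H c d H'; unfold amp; rewrite H, H'; reflexivity. Qed.
#[global] Instance nmul_proper n : Proper (eqv ==> eqv) (nmul n).
Proof. induction n; intros a b H; cbn [nmul]. reflexivity. apply amp_proper; [exact H | apply IHn; exact H]. Qed.

Lemma E a b : eqv (Imp a b) (Imp (neg b) (neg a)).
Proof.
  split. exact (K_B a b zero).
  transitivity (Imp (neg (neg a)) (neg (neg b))). exact (K_B (neg b) (neg a) zero).
  rewrite !dneg'. reflexivity.
Qed.

Lemma swap y b : eqv (Imp y b) (neg (Imp b y)).
Proof.
  split.
  - transitivity (Imp (Imp b y) (Imp y y)). exact (K_B y b y).
    apply prefix. apply (proj1 (imp_self y)).
  - apply (Crule y (neg (Imp b y)) b).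
    change (le y (Imp (neg (Imp b y)) b)).
    rewrite (E (neg (Imp b y)) b). rewrite dneg'.
    transitivity (Imp zero y). apply (proj2 (Z1 y)).
    exact (Crule _ _ _ (K_B b zero y)).
Qed.

Lemma R x b c : eqv (Imp (Imp x b) c) (Imp (neg x) (Imp b c)).
Proof.
  rewrite (E (Imp x b) c). rewrite <- (swap b x).
  rewrite (E b c). rewrite (C_eqv (neg x) (neg c) (neg b)).
  rewrite <- (E b x). reflexivity.
Qed.

Lemma res a b c : eqv (Imp (amp a b) c) (Imp a (Imp b c)).
Proof. unfold amp. rewrite (R (neg a) b c). rewrite dneg'. reflexivity. Qed.
Lemma res_le a b c : le (amp a b) c <-> le a (Imp b c).
Proof. unfold le. rewrite res. reflexivity. Qed.
Lemma comm a b : eqv (amp a b) (amp b a).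
Proof. unfold amp. rewrite (E (neg a) b). rewrite dneg'. reflexivity. Qed.
Lemma assoc a b c : eqv (amp (amp a b) c) (amp a (amp b c)).
Proof.
  unfold amp. rewrite <- (swap b (neg a)). rewrite (R b (neg a) c).
  rewrite (C_eqv (neg b) (neg a) c). reflexivity.
Qed.
Lemma neg_zero : eqv (neg zero) zero.
Proof. exact (Z1 zero). Qed.
Lemma unit_r a : eqv (amp a zero) a.
Proof. exact (dneg' a). Qed.
Lemma unit_l a : eqv (amp zero a) a.
Proof. unfold amp. rewrite neg_zero. apply Z1. Qed.
Lemma inv a : eqv (amp a (neg a)) zero.
Proof. exact (imp_self (neg a)). Qed.
Lemma imp_amp a b : eqv (Imp a b) (amp (neg a) b).
Proof. unfold amp. rewrite dneg'. reflexivity. Qed.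
Lemma neg_amp a b : eqv (neg (amp a b)) (amp (neg a) (neg b)).
Proof.
  change (neg (amp a b)) with (Imp (amp a b) zero). rewrite res.
  change (Imp b zero) with (neg b). apply imp_amp.
Qed.
Lemma amp_mono a a' b b' : le a a' -> le b b' -> le (amp a b) (amp a' b').
Proof.
  intros H1 H2. unfold amp. transitivity (Imp (neg a') b).
  apply suffix. apply suffix. exact H1. apply prefix; exact H2.
Qed.
Lemma lcomm a b c : eqv (amp a (amp b c)) (amp b (amp a c)).
Proof. rewrite <- assoc, (comm a b), assoc. reflexivity. Qed.
Lemma medial a b c d : eqv (amp (amp a b) (amp c d)) (amp (amp a c) (amp b d)).
Proof. rewrite !assoc, (lcomm b c d). reflexivity. Qed.

Lemma nmul_amp n a b : eqv (nmul n (amp a b)) (amp (nmul n a) (nmul n b)).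
Proof.
  induction n; cbn [nmul]. symmetry; apply unit_l.
  rewrite IHn. apply medial.
Qed.
Lemma nmul_neg n a : eqv (nmul n (neg a)) (neg (nmul n a)).
Proof.
  induction n; cbn [nmul]. symmetry; apply neg_zero.
  rewrite IHn, neg_amp. reflexivity.
Qed.
Lemma nmul_imp n a b : eqv (nmul n (Imp a b)) (Imp (nmul n a) (nmul n b)).
Proof. rewrite (imp_amp a b), nmul_amp, nmul_neg, <- imp_amp. reflexivity. Qed.

Lemma box_amp a b : le (amp (Box a) (Box b)) (Box (amp a b)).
Proof.
  apply res_le. transitivity (Box (Imp b (amp a b))).
  apply box_mono. apply res_le. reflexivity. exact (K_K b (amp a b)).
Qed.
Lemma box_zero_ge : le zero (Box zero).
Proof. exact (proj1 (thm_zero _) (K_nec _ (K_I p0))). Qed.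
Lemma box_zero_le : le (Box zero) zero.
Proof.
  assert (H : le (Box zero) (Imp (Box zero) (Box zero))).
  { transitivity (Box (Imp zero zero)). apply box_mono. apply (proj2 (Z1 zero)).
    exact (K_K zero zero). }
  apply res_le in H.
  transitivity (amp (amp (Box zero) (Box zero)) (neg (Box zero))).
  { rewrite assoc, inv, unit_r. reflexivity. }
  transitivity (amp (Box zero) (neg (Box zero))).
  apply amp_mono; [exact H|reflexivity]. rewrite inv; reflexivity.
Qed.
Lemma box_nmul n a : le (Box (nmul n a)) (nmul n (Box a)).
Proof.
  destruct n as [|[|n]].
  - apply box_zero_le.
  - cbn [nmul]. rewrite !unit_r. reflexivity.
  - apply K_D; lia.
Qed.

Lemma S_cons a L : eqv (bigamp (a :: L)) (amp a (bigamp L)).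
Proof. destruct L. simpl. symmetry; apply unit_r. reflexivity. Qed.
Lemma S_app G P : eqv (bigamp (G ++ P)) (amp (bigamp G) (bigamp P)).
Proof.
  induction G as [|a G IHG].
  - change (eqv (bigamp P) (amp zero (bigamp P))). symmetry; apply unit_l.
  - change ((a :: G) ++ P) with (a :: (G ++ P)).
    rewrite (S_cons a (G ++ P)), IHG, (S_cons a G), assoc. reflexivity.
Qed.
Lemma S_perm G G' : Permutation G G' -> eqv (bigamp G) (bigamp G').
Proof.
  induction 1.
  - reflexivity.
  - rewrite !S_cons, IHPermutation; reflexivity.
  - rewrite !S_cons; apply lcomm.
  - etransitivity; eauto.
Qed.
Lemma S_ntimes n L : eqv (bigamp (ntimes n L)) (nmul n (bigamp L)).
Proof. induction n; cbn [ntimes nmul]. reflexivity. rewrite S_app, IHn. reflexivity. Qed.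
Lemma S_repeat n a : eqv (bigamp (repeat a n)) (nmul n a).
Proof. induction n; cbn [repeat nmul]. reflexivity. rewrite S_cons, IHn. reflexivity. Qed.
Lemma S_mapbox G : le (bigamp (map Box G)) (Box (bigamp G)).
Proof.
  induction G as [|a G IHG].
  - apply box_zero_ge.
  - change (map Box (a :: G)) with (Box a :: map Box G).
    rewrite !S_cons. transitivity (amp (Box a) (Box (bigamp G))).
    apply amp_mono; [reflexivity|exact IHG]. apply box_amp.
Qed.

Lemma sound G D : GKd G D -> le (bigamp G) (bigamp D).
Proof.
  induction 1 as [G D G' D' H IH HG HD | D
    | G D P S0 a H1 IH1 H2 IH2 | G D P S0 H1 IH1 H2 IH2
    | n G D Hn H IH | G D a b H IH | G D a b H IH | n G a H IH].
  - rewrite <- (S_perm _ _ HG), <- (S_perm _ _ HD). exact IH.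
  - reflexivity.
  - rewrite S_app in IH1. change (bigamp [a]) with a in IH1.
    rewrite S_cons in IH2. rewrite !S_app.
    transitivity (amp (bigamp G) (amp a (bigamp S0))).
    apply amp_mono; [reflexivity| exact IH2].
    rewrite <- assoc. transitivity (amp (bigamp D) (bigamp S0)).
    apply amp_mono; [exact IH1 | reflexivity]. rewrite comm; reflexivity.
  - rewrite !S_app. rewrite (comm (bigamp S0) (bigamp D)). apply amp_mono; assumption.
  - rewrite !S_ntimes in IH. apply (K_con n); auto.
    change (Kd (nmul n (Imp (bigamp G) (bigamp D)))).
    rewrite nmul_imp. exact IH.
  - rewrite S_app in IH |- *. change (bigamp [b]) with b in IH.
    change (bigamp [Imp a b]) with (Imp a b).
    rewrite S_cons in IH. rewrite imp_amp.
    rewrite (lcomm (bigamp G) (neg a) b), (comm (neg a)).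
    transitivity (amp (amp a (bigamp D)) (neg a)).
    apply amp_mono; [exact IH | reflexivity].
    rewrite (comm a (bigamp D)), assoc, inv, unit_r. reflexivity.
  - rewrite S_app in IH. change (bigamp [a]) with a in IH.
    rewrite S_cons in IH |- *.
    rewrite <- (unit_r (bigamp G)). rewrite <- (inv a). rewrite <- assoc.
    transitivity (amp (amp b (bigamp D)) (neg a)).
    apply amp_mono; [exact IH| reflexivity].
    rewrite imp_amp. rewrite (comm (amp b (bigamp D)) (neg a)), <- assoc. reflexivity.
  - rewrite S_repeat in *. transitivity (Box (bigamp G)). apply S_mapbox.
    transitivity (Box (nmul n a)). apply box_mono; exact IH. apply box_nmul.
Qed.

Ltac split_list x r :=
  lazymatch r with
  | x :: ?t => constr:(@pair (list form) (list form) nil t)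
  | ?y :: ?t => let p := split_list x t in
                lazymatch p with pair ?l1 ?l2 => constr:(@pair (list form) (list form) (y :: l1) l2) end
  end.
Ltac perm_tac :=
  simpl;
  lazymatch goal with
  | |- Permutation nil nil => apply perm_nil
  | |- Permutation (?x :: ?l) ?r =>
      let p := split_list x r in
      lazymatch p with pair ?l1 ?l2 =>
        change r with (l1 ++ x :: l2); apply Permutation_cons_app; perm_tac end
  end.
Ltac gp G D := apply (GK_perm G D); [ | perm_tac | perm_tac ].

Lemma gk_cut a G D P S0 : GKd (a :: G) D -> GKd P (a :: S0) -> GKd (G ++ P) (S0 ++ D).
Proof.
  intros H1 H2. apply GK_cut with (a := a); auto.
  apply (GK_perm (a :: G) D); auto. apply Permutation_cons_append.
Qed.
Lemma impL' a b G D : GKd (b :: G) (a :: D) -> GKd (Imp a b :: G) D.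
Proof.
  intro H. apply (GK_perm (G ++ [Imp a b]) D).
  apply GK_impL. apply (GK_perm (b :: G) (a :: D)); auto.
  apply Permutation_cons_append. symmetry; apply Permutation_cons_append. reflexivity.
Qed.
Lemma impR' a b G D : GKd (a :: G) (b :: D) -> GKd G (Imp a b :: D).
Proof.
  intro H. apply GK_impR. apply (GK_perm (a :: G) (b :: D)); auto.
  apply Permutation_cons_append.
Qed.

Lemma zeroR : GKd [] [zero].
Proof. apply impR'. apply GK_id. Qed.
Lemma zeroL : GKd [zero] [].
Proof. apply impL'. apply GK_id. Qed.
Lemma addzeroR G D : GKd G D -> GKd G (zero :: D).
Proof. intro H. pose proof (GK_mix G D [] [zero] H zeroR) as H'. rewrite app_nil_r in H'. exact H'. Qed.
Lemma addzeroL G D : GKd G D -> GKd (zero :: G) D.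
Proof. intro H. pose proof (GK_mix [zero] [] G D zeroL H) as H'. rewrite app_nil_r in H'. exact H'. Qed.
Lemma mpseq a b : GKd [Imp a b; a] [b].
Proof. apply impL'. gp [a; b] [a; b]. apply GK_id. Qed.
Lemma ampR a b : GKd [a; b] [amp a b].
Proof. unfold amp. apply impR'. unfold neg. apply impL'. apply addzeroL, GK_id. Qed.
Lemma ampL a b : GKd [amp a b] [a; b].
Proof. unfold amp. apply impL'. unfold neg. apply impR'. apply addzeroR, GK_id. Qed.

Lemma combine_right a b G D : GKd G (a :: b :: D) -> GKd G (amp a b :: D).
Proof. intro H. unfold amp. apply impR'. unfold neg. apply impL'. apply addzeroL, H. Qed.
Lemma split_right a b G D : GKd G (amp a b :: D) -> GKd G (a :: b :: D).
Proof.
  intro H. pose proof (gk_cut (amp a b) [] [a; b] G D (ampL a b) H) as H'.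
  apply (GK_perm ([] ++ G) (D ++ [a; b])); [exact H' | reflexivity | exact (Permutation_app_comm D [a; b])].
Qed.
Lemma split_left a b G D : GKd (amp a b :: G) D -> GKd (a :: b :: G) D.
Proof.
  intro H. pose proof (gk_cut (amp a b) G D [a; b] [] H (ampR a b)) as H'.
  apply (GK_perm (G ++ [a; b]) ([] ++ D)); [exact H' | exact (Permutation_app_comm G [a; b]) | reflexivity].
Qed.
Lemma rmzeroR G D : GKd G (zero :: D) -> GKd G D.
Proof. intro H. pose proof (gk_cut zero [] [] G D zeroL H) as H'. rewrite app_nil_r in H'. exact H'. Qed.
Lemma rmzeroL G D : GKd (zero :: G) D -> GKd G D.
Proof. intro H. pose proof (gk_cut zero G D [] [] H zeroR) as H'. rewrite app_nil_r in H'. exact H'. Qed.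

Lemma collapse_nmul n x G D : GKd G (repeat x n ++ D) -> GKd G (nmul n x :: D).
Proof.
  revert D; induction n; intros D H.
  - apply addzeroR, H.
  - simpl in H. cbn [nmul]. apply combine_right.
    apply (GK_perm G (nmul n x :: x :: D)).
    + apply IHn. apply (GK_perm G (x :: repeat x n ++ D)); [exact H | reflexivity | apply Permutation_middle].
    + reflexivity.
    + apply perm_swap.
Qed.
Lemma expand_nmul n x G D : GKd G (nmul n x :: D) -> GKd G (repeat x n ++ D).
Proof.
  revert D; induction n; intros D H.
  - apply rmzeroR, H.
  - cbn [nmul] in H. apply split_right in H. simpl.
    apply (GK_perm G (repeat x n ++ x :: D)).
    + apply IHn. apply (GK_perm G (x :: nmul n x :: D)); [exact H | reflexivity | apply perm_swap].
    + reflexivity.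
    + symmetry; apply Permutation_middle.
Qed.
Lemma expR L G D : GKd G (bigamp L :: D) -> GKd G (L ++ D).
Proof.
  revert D; induction L as [|a L IHL]; intros D H.
  - apply rmzeroR, H.
  - destruct L as [|b L'].
    + exact H.
    + change (bigamp (a :: b :: L')) with (amp a (bigamp (b :: L'))) in H.
      apply split_right in H.
      apply (GK_perm G ((b :: L') ++ a :: D)).
      * apply IHL. apply (GK_perm G (a :: bigamp (b :: L') :: D)); [exact H | reflexivity | apply perm_swap].
      * reflexivity.
      * symmetry; apply Permutation_middle.
Qed.
Lemma expL L G D : GKd (bigamp L :: G) D -> GKd (L ++ G) D.
Proof.
  revert G; induction L as [|a L IHL]; intros G H.
  - apply rmzeroL, H.
  - destruct L as [|b L'].
    + exact H.
    + change (bigamp (a :: b :: L')) with (amp a (bigamp (b :: L'))) in H.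
      apply split_left in H.
      apply (GK_perm ((b :: L') ++ a :: G) D).
      * apply IHL. apply (GK_perm (a :: bigamp (b :: L') :: G) D); [exact H | apply perm_swap | reflexivity].
      * symmetry; apply Permutation_middle.
      * reflexivity.
Qed.

Lemma ntimes_nil n : ntimes n [] = [].
Proof. induction n; simpl; auto. Qed.
Lemma ntimes_one n a : ntimes n [a] = repeat a n.
Proof. induction n; simpl; auto. rewrite IHn; auto. Qed.

Lemma complete_thm phi : Kd phi -> GKd [] [phi].
Proof.
  induction 1.
  - apply impR'. apply impR'. apply impR'.
    gp [Imp a b; a; Imp b c] [c]. apply impL'.
    gp [Imp b c; b; a] [a; c]. apply impL'.
    gp [a; b; c] [a; b; c]. apply GK_id.
  - apply impR'. apply impR'. apply impR'.
    gp [Imp a (Imp b c); a; b] [c]. apply impL'. apply impL'.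
    gp [a; b; c] [a; b; c]. apply GK_id.
  - apply impR'. apply GK_id.
  - apply impR'. apply impL'. apply impR'. gp [a; b] [a; b]. apply GK_id.
  - apply impR'. apply impR'. gp [Box (Imp a b); Box a] [Box b].
    exact (GK_box 1 [Imp a b; a] b (mpseq a b)).
  - apply impR'. apply collapse_nmul. rewrite app_nil_r.
    assert (H' : GKd [nmul n a] (repeat a n)).
    { pose proof (expand_nmul n a [nmul n a] [] (GK_id [nmul n a])) as H'.
      rewrite app_nil_r in H'. exact H'. }
    exact (GK_box n [nmul n a] a H').
  - pose proof (gk_cut (Imp a b) [a] [b] [] [] (mpseq a b) IHKd2) as H3.
    simpl in H3. exact (gk_cut a [] [b] [] [] H3 IHKd1).
  - exact (GK_box 1 [] a IHKd).
  - apply (GK_sc n [] [a]); auto. rewrite ntimes_nil, ntimes_one.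
    pose proof (expand_nmul n a [] [] IHKd) as H'. rewrite app_nil_r in H'. exact H'.
Qed.

Theorem proposition4p3 : forall G D : list form, GKd G D <-> Kd (Iseq G D).
Proof.
  intros G D. split.
  - intro H. exact (sound G D H).
  - intro H. unfold Iseq in H. apply complete_thm in H.
    pose proof (gk_cut _ [bigamp G] [bigamp D] [] [] (mpseq (bigamp G) (bigamp D)) H) as H1.
    simpl in H1.
    pose proof (expL G [] [bigamp D] H1) as H2. rewrite app_nil_r in H2.
    pose proof (expR D G [] H2) as H3. rewrite app_nil_r in H3. exact H3.
Qed.
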